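(* Let $n\ge 3$, $q=\frac{2n}{n-2}$, $\kappa=\frac{n-1}{n}$. Identify $S^1$ with $[-\pi,\pi]$ with endpoints identified, and let $\lambda=-1$ on $(-\pi,0)$, $\lambda=1$ on $(0,\pi)$. Let $N$ be a smooth positive function on $S^1$, $\gamma_N=-\frac{\int_{S^1}\lambda N}{\int_{S^1}N}$, and $t,\eta,\mu\in\mathbb{R}$ with $|t|\neq1$. For $d>0$ let $\psi_d$ and $\hat\psi_d$ be the unique positive solutions in $W^{2,\infty}(S^1)$ of, respectively, $$-2\kappa q\,d^{-2q/n}\psi_d''-2\eta^2d^{-2q}\psi_d^{-q-1}-\kappa(\mu d^{-q}+\gamma_N+\lambda)^2\psi_d^{-q-1}+\kappa(t+\lambda)^2\psi_d^{q-1}=0,$$ $$-2\kappa q\,d^{-2q/n}\hat\psi_d''-\kappa(\gamma_N+\lambda)^2\hat\psi_d^{-q-1}+\kappa(t+\lambda)^2\hat\psi_d^{q-1}=0.$$ Then there exists a constant $c>0$ such that $\|\hat\psi_d-\psi_d\|_{L^\infty(S^1)}<c\,d^{-q}$ for all sufficiently large $d$. In particular $\lim_{d\to\infty}\psi_d(0)=\lim_{d\to\infty}\hat\psi_d(0)$. *)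

(* Defs.v *)
From Stdlib Require Import Reals.
From Coquelicot Require Import Coquelicot.
Open Scope R_scope.

(* S^1 = [-pi,pi] with endpoints identified: functions on S^1 are
   2*pi-periodic functions R -> R. *)
Definition periodic2pi (f : R -> R) : Prop := forall x, f (x + 2 * PI) = f x.

(* Representative of x in [-pi, pi). *)
Definition circ_rep (x : R) : R := x - 2 * PI * IZR (Int_part ((x + PI) / (2 * PI))).

(* lambda = -1 on (-pi,0), 1 on (0,pi); value 0 at the two jump points 0, pi
   (irrelevant: only used a.e. / in integrals). *)
Definition lam (x : R) : R :=
  let y := circ_rep x in
  if Rlt_dec y 0 then -1 else if Rlt_dec 0 y then 1 else 0.

Definition smooth (f : R -> R) : Prop := forall (k : nat) (x : R), ex_derive_n f k x.

Definition gammaN (N : R -> R) : R :=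
  - (RInt (fun x => lam x * N x) (-PI) PI) / RInt N (-PI) PI.

Definition jump_pt (x : R) : Prop := exists k : Z, x = IZR k * PI.

(* Since the coefficients are
   continuous away from the jump points of lambda, a W^{2,oo} solution is
   exactly a C^1 periodic function, C^2 away from the jump points, satisfying
   the equation there. *)
Definition W2inf_pos_solution (a : R) (F : R -> R -> R) (psi : R -> R) : Prop :=
  periodic2pi psi /\ (forall x, 0 < psi x) /\
  exists dpsi : R -> R,
    (forall x, is_derive psi x (dpsi x)) /\
    (forall x, ~ jump_pt x ->
       exists d2, is_derive dpsi x d2 /\ a * d2 = F x (psi x)).

(* Main.v *)
Require Import Defs.
From Stdlib Require Import Reals Lra ZArith Lia.
From Coquelicot Require Import Coquelicot.
Open Scope R_scope.

Lemma Int_part_unique (z : Z) (r : R) : IZR z <= r < IZR z + 1 -> Int_part r = z.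
Proof.
  intros [H1 H2]. destruct (base_Int_part r) as [H3 H4].
  assert (A : (Int_part r < z + 1)%Z). { apply lt_IZR. rewrite plus_IZR. simpl. lra. }
  assert (B : (z < Int_part r + 1)%Z). { apply lt_IZR. rewrite plus_IZR. simpl. lra. }
  lia.
Qed.

Lemma PI2_pos : 0 < 2 * PI.
Proof. pose proof PI_RGT_0. lra. Qed.

Lemma lam_interval (m : Z) (x : R) :
  IZR m * PI < x < IZR (m + 1) * PI ->
  lam x = (if Z.even m then 1 else -1) /\ ~ jump_pt x.
Proof.
  intros [H1 H2]. pose proof PI_RGT_0 as HP. rewrite plus_IZR in H2. simpl in H2.
  split.
  - unfold lam, circ_rep.
    destruct (Z.even m) eqn:E.
    + apply Zeven_bool_iff in E. apply Zeven_ex in E. destruct E as [j ->].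
      rewrite mult_IZR in *. simpl in *.
      rewrite (Int_part_unique j).
      2:{ split.
          - apply (Rmult_le_reg_r (2*PI)). lra. field_simplify. 2: lra. nra.
          - apply (Rmult_lt_reg_r (2*PI)). lra. field_simplify. 2: lra. nra. }
      destruct (Rlt_dec (x - 2 * PI * IZR j) 0). nra.
      destruct (Rlt_dec 0 (x - 2 * PI * IZR j)). reflexivity. nra.
    + assert (E' : Z.odd m = true). { rewrite <- Z.negb_even, E. reflexivity. }
      apply Zodd_bool_iff in E'. apply Zodd_ex in E'. destruct E' as [j ->].
      rewrite plus_IZR, mult_IZR in *. simpl in *.
      rewrite (Int_part_unique (j+1)).
      2:{ rewrite plus_IZR. simpl. split.
          - apply (Rmult_le_reg_r (2*PI)). lra. field_simplify. 2: lra. nra.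
          - apply (Rmult_lt_reg_r (2*PI)). lra. field_simplify. 2: lra. nra. }
      rewrite plus_IZR. simpl.
      destruct (Rlt_dec (x - 2 * PI * (IZR j + 1)) 0). reflexivity. nra.
  - intros [k Hk]. subst x.
    assert (A : IZR m < IZR k) by nra. assert (B : IZR k < IZR m + 1) by nra.
    apply lt_IZR in A. assert (B' : (k < m + 1)%Z). { apply lt_IZR. rewrite plus_IZR. simpl. lra. }
    lia.
Qed.

Lemma lam_right (x0 : R) : exists l eps, (l = 1 \/ l = -1) /\ 0 < eps /\
  forall x, x0 < x < x0 + eps -> lam x = l /\ ~ jump_pt x.
Proof.
  pose proof PI_RGT_0 as HP.
  set (m := Int_part (x0 / PI)).
  destruct (base_Int_part (x0 / PI)) as [H1 H2]. fold m in H1, H2.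
  assert (A : IZR m * PI <= x0).
  { apply (Rmult_le_compat_r PI) in H1; [|lra]. field_simplify in H1; lra. }
  assert (B : x0 < (IZR m + 1) * PI).
  { assert (x0 / PI < IZR m + 1) by lra.
    apply (Rmult_lt_compat_r PI) in H; [|lra]. field_simplify in H; lra. }
  exists (if Z.even m then 1 else -1), ((IZR m + 1) * PI - x0).
  split. { destruct (Z.even m); auto. }
  split. lra.
  intros x Hx. apply lam_interval. rewrite plus_IZR. simpl. lra.
Qed.

Lemma per_nat (f : R -> R) : periodic2pi f -> forall (n : nat) x, f (x + 2 * PI * INR n) = f x.
Proof.
  intros Hp n. induction n; intros x.
  - simpl. f_equal. ring.
  - rewrite S_INR. replace (x + 2 * PI * (INR n + 1)) with ((x + 2 * PI * INR n) + 2 * PI) by ring.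
    rewrite Hp. apply IHn.
Qed.

Lemma per_int (f : R -> R) : periodic2pi f -> forall (k : Z) x, f (x + 2 * PI * IZR k) = f x.
Proof.
  intros Hp k x. destruct k as [|p|p].
  - simpl. f_equal. ring.
  - rewrite <- (positive_nat_Z p), <- INR_IZR_INZ. apply per_nat; auto.
  - rewrite IZR_NEG, <- (positive_nat_Z p), <- INR_IZR_INZ.
    rewrite <- (per_nat f Hp (Pos.to_nat p) (x + 2 * PI * - INR (Pos.to_nat p))).
    f_equal. ring.
Qed.

Lemma per_reduce (f : R -> R) : periodic2pi f -> forall x, exists y, -PI <= y <= PI /\ f x = f y.
Proof.
  intros Hp x. pose proof PI_RGT_0 as HP.
  set (k := Int_part ((x + PI) / (2 * PI))).
  destruct (base_Int_part ((x + PI) / (2 * PI))) as [H1 H2]. fold k in H1, H2.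
  exists (x - 2 * PI * IZR k). split.
  - split.
    + apply (Rmult_le_compat_r (2*PI)) in H1; [|lra]. field_simplify in H1; lra.
    + assert ((x + PI) / (2 * PI) < IZR k + 1) by lra.
      apply (Rmult_lt_compat_r (2*PI)) in H; [|lra]. field_simplify in H; lra.
  - rewrite <- (per_int f Hp k (x - 2 * PI * IZR k)). f_equal. ring.
Qed.

Lemma global_max (f : R -> R) : periodic2pi f -> (forall x, continuous f x) ->
  exists x0, forall y, f y <= f x0.
Proof.
  intros Hp Hc. pose proof PI_RGT_0 as HP.
  destruct (continuous_ab_maj_consistent f (-PI) PI) as [M [HM _]]. lra. intros; apply Hc.
  exists M. intros y. destruct (per_reduce f Hp y) as [z [Hz ->]]. apply HM; auto.
Qed.

Lemma right_max (f df g : R -> R) (x0 eps : R) :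
  0 < eps -> (forall x, is_derive f x (df x)) ->
  (forall x, x0 < x < x0 + eps -> is_derive df x (g x)) ->
  (forall x, x0 < x < x0 + eps -> 0 < g x) ->
  (forall y, f y <= f x0) -> False.
Proof.
  intros He Hf Hdf Hg Hmax.
  assert (Hfl : forall x, derivable_pt_lim f x (df x)) by (intros; apply is_derive_Reals; auto).
  assert (H0 : 0 <= df x0).
  { destruct (Rle_dec 0 (df x0)) as [h|h]; auto. exfalso.
    destruct (Hfl x0 (- df x0)) as [del Hdel]. lra.
    pose proof (cond_pos del).
    specialize (Hdel (- (del/2))). 
    assert (Hq : 0 <= (f (x0 + - (del / 2)) - f x0) / - (del / 2)).
    { replace ((f (x0 + - (del / 2)) - f x0) / - (del / 2)) with
        ((f x0 - f (x0 + - (del / 2))) / (del / 2)) by (field; lra).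
      apply Rdiv_le_0_compat. specialize (Hmax (x0 + - (del/2))). lra. lra. }
    assert (HA : Rabs (- (del / 2)) < del). { rewrite Rabs_left; lra. }
    specialize (Hdel ltac:(lra) HA). apply Rabs_def2 in Hdel. lra. }
  assert (Hinc : forall y1 y2, x0 < y1 -> y1 < y2 -> y2 < x0 + eps -> df y1 < df y2).
  { intros y1 y2 h1 h2 h3.
    destruct (MVT_cor2 df g y1 y2 h2) as [c [Hc1 Hc2]].
    { intros c Hc. apply is_derive_Reals. apply Hdf. lra. }
    assert (0 < g c) by (apply Hg; lra). nra. }
  assert (Hpos : forall y, x0 < y < x0 + eps -> 0 < df y).
  { intros y Hy. destruct (Rlt_dec 0 (df y)) as [h|h]; auto. exfalso.
    set (y' := (x0 + y)/2).
    assert (Hy' : df y' < df y) by (apply Hinc; unfold y'; lra).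
    destruct (Hfl x0 (- df y')) as [del Hdel]. lra.
    pose proof (cond_pos del).
    set (h0 := Rmin del (y' - x0) / 2).
    assert (Hh0 : 0 < h0 /\ h0 < del /\ h0 < y' - x0).
    { unfold h0. pose proof (Rmin_l del (y'-x0)). pose proof (Rmin_r del (y'-x0)).
      assert (0 < Rmin del (y' - x0)). { apply Rmin_glb_lt; unfold y'; lra. } lra. }
    destruct (MVT_cor2 f df x0 (x0 + h0) ltac:(lra)) as [c [Hc1 Hc2]].
    { intros; auto. }
    assert (df c < df y') by (apply Hinc; unfold y' in *; lra).
    specialize (Hdel h0 ltac:(lra) ltac:(rewrite Rabs_right; lra)).
    replace ((f (x0 + h0) - f x0) / h0) with (df c) in Hdel.
    2:{ rewrite Hc1. field. lra. }
    apply Rabs_def2 in Hdel. lra. }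
  destruct (MVT_cor2 f df x0 (x0 + eps/2) ltac:(lra)) as [c [Hc1 Hc2]].
  { intros; auto. }
  assert (0 < df c) by (apply Hpos; lra).
  specialize (Hmax (x0 + eps/2)). nra.
Qed.

Lemma max_principle (f df : R -> R) (a : R) (Phi : R -> R -> R) (x0 : R) :
  0 < a -> (forall x, is_derive f x (df x)) ->
  (forall x, ~ jump_pt x -> exists d2 : R, is_derive df x d2 /\ a * d2 = Phi (lam x) x) ->
  (forall l, continuous (Phi l) x0) ->
  (forall y, f y <= f x0) ->
  exists l, (l = 1 \/ l = -1) /\ Phi l x0 <= 0.
Proof.
  intros Ha Hf Hdf Hc Hmax.
  destruct (lam_right x0) as [l [e1 [Hl [He1 Hlam]]]].
  exists l. split; auto.
  destruct (Rle_dec (Phi l x0) 0) as [h|h]; auto. exfalso.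
  assert (Hcp : continuity_pt (Phi l) x0) by (apply continuity_pt_filterlim; apply Hc).
  destruct (Hcp (Phi l x0)) as [del [Hdel Hd]]. lra.
  apply (right_max f df (fun x => Phi l x / a) x0 (Rmin e1 del)); auto.
  - apply Rmin_glb_lt; auto.
  - intros x Hx. pose proof (Rmin_l e1 del).
    destruct (Hlam x ltac:(lra)) as [Hlx Hj].
    destruct (Hdf x Hj) as [d2 [Hd2 Ha2]]. rewrite Hlx in Ha2.
    assert (E : Phi l x / a = (d2 : R)). { rewrite <- Ha2. unfold Rdiv. rewrite (Rmult_comm a), Rmult_assoc, Rinv_r. ring. lra. } rewrite E. auto.
  - intros x Hx. pose proof (Rmin_r e1 del).
    apply Rdiv_lt_0_compat; auto.
    assert (Hx2 : dist R_met x x0 < del). { simpl. unfold R_dist. rewrite Rabs_right; lra. }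
    assert (Hdx : D_x no_cond x0 x) by (split; [exact I | lra]). specialize (Hd x (conj Hdx Hx2)). simpl in Hd. unfold R_dist in Hd.
    apply Rabs_def2 in Hd. lra.
Qed.

Lemma Rpower_pos' x y : 0 < Rpower x y.
Proof. unfold Rpower. apply exp_pos. Qed.

Lemma Rpower_inv_pair u q : 0 < u -> Rpower u (-q-1) * Rpower u (q+1) = 1.
Proof. intros. rewrite <- Rpower_plus. replace (-q-1+(q+1)) with 0 by ring. apply Rpower_O; auto. Qed.

Lemma Rpower_succ u q : 0 < u -> Rpower u (q+1) = Rpower u q * u.
Proof. intros. rewrite Rpower_plus, Rpower_1; auto. Qed.

Lemma key_alg u v X Y B q : 0 < u -> 0 < v -> 0 <= Y -> 0 <= B -> 1 < q -> v <= u ->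
  (-X * Rpower u (-q-1) + B * Rpower u (q-1)) - (-Y * Rpower v (-q-1) + B * Rpower v (q-1)) <= 0 ->
  Y * u <= X * v.
Proof.
  intros Hu Hv HY HB Hq Hvu H.
  assert (H2 : Rpower v (q-1) <= Rpower u (q-1)) by (apply Rle_Rpower_l; lra).
  assert (H3 : Y * Rpower v (-q-1) <= X * Rpower u (-q-1)) by nra.
  pose proof (Rpower_inv_pair u q Hu) as H0. pose proof (Rpower_inv_pair v q Hv) as H1.
  pose proof (Rpower_pos' u (q+1)) as P1. pose proof (Rpower_pos' v (q+1)) as P2.
  assert (H4 : Y * Rpower u (q+1) <= X * Rpower v (q+1)).
  { apply (Rmult_le_compat_r (Rpower u (q+1) * Rpower v (q+1))) in H3; [|nra].
    replace (Y * Rpower v (- q - 1) * (Rpower u (q + 1) * Rpower v (q + 1))) with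
      (Y * Rpower u (q+1) * (Rpower v (- q - 1) * Rpower v (q + 1))) in H3 by ring.
    replace (X * Rpower u (- q - 1) * (Rpower u (q + 1) * Rpower v (q + 1))) with
      (X * Rpower v (q+1) * (Rpower u (- q - 1) * Rpower u (q + 1))) in H3 by ring.
    rewrite H0, H1 in H3. lra. }
  rewrite !Rpower_succ in H4 by auto.
  assert (H5 : Rpower v q <= Rpower u q) by (apply Rle_Rpower_l; lra).
  pose proof (Rpower_pos' v q) as P3.
  assert (Y * u * Rpower v q <= Y * u * Rpower u q) by (apply Rmult_le_compat_l; nra).
  assert (Y * u * Rpower v q <= X * v * Rpower v q) by lra.
  apply Rmult_le_reg_r with (Rpower v q); auto.
Qed.

Lemma pow_bound u X B q : 0 < u -> 0 < B -> 1 < q ->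
  -X * Rpower u (-q-1) + B * Rpower u (q-1) <= 0 -> u <= Rmax 1 (X / B).
Proof.
  intros Hu HB Hq H.
  destruct (Rle_dec u 1) as [h|h]. { apply Rle_trans with 1; auto. apply Rmax_l. }
  apply Rle_trans with (X / B); [| apply Rmax_r].
  pose proof (Rpower_inv_pair u q Hu) as E0. pose proof (Rpower_pos' u (q+1)) as P0.
  assert (H1 : B * (Rpower u (q-1) * Rpower u (q+1)) <= X).
  { assert (H2 : B * Rpower u (q-1) <= X * Rpower u (-q-1)) by lra.
    apply (Rmult_le_compat_r (Rpower u (q+1))) in H2; [|lra].
    replace (X * Rpower u (- q - 1) * Rpower u (q + 1)) with (X * (Rpower u (- q - 1) * Rpower u (q + 1))) in H2 by ring.
    rewrite E0 in H2. lra. }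
  rewrite <- Rpower_plus in H1.
  assert (H2 : u <= Rpower u (q - 1 + (q + 1))).
  { rewrite <- (Rpower_1 u) at 1 by auto. apply Rle_Rpower; lra. }
  apply Rmult_le_reg_l with B; auto. unfold Rdiv. field_simplify; nra.
Qed.

Lemma cont_rpow (p : R -> R) (r x : R) : ex_derive p x -> 0 < p x ->
  ex_derive (fun y => Rpower (p y) r) x.
Proof. intros. unfold Rpower. auto_derive. split; auto. Qed.

Lemma gamma_bound (N : R -> R) : (forall x, continuous N x) -> (forall x, 0 < N x) ->
  -1 < gammaN N < 1.
Proof.
  intros Hc Hp. pose proof PI_RGT_0 as HP.
  assert (Ex : forall a b, ex_RInt N a b) by (intros; apply (@ex_RInt_continuous R_CompleteNormedModule); auto).
  set (I1 := RInt N (-PI) 0). set (I2 := RInt N 0 PI).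
  assert (P1 : 0 < I1) by (apply RInt_gt_0; auto; lra).
  assert (P2 : 0 < I2) by (apply RInt_gt_0; auto; lra).
  assert (L1 : forall x, -PI < x < 0 -> lam x * N x = - N x).
  { intros x Hx. destruct (lam_interval (-1) x) as [Hl _].
    { replace (IZR (-1)) with (-1) by reflexivity. replace (IZR (-1+1)) with 0 by reflexivity. lra. }
    rewrite Hl. replace (Z.even (-1)) with false by reflexivity. ring. }
  assert (L2 : forall x, 0 < x < PI -> lam x * N x = N x).
  { intros x Hx. destruct (lam_interval 0 x) as [Hl _].
    { replace (IZR 0) with 0 by reflexivity. replace (IZR (0+1)) with 1 by reflexivity. lra. }
    rewrite Hl. replace (Z.even 0) with true by reflexivity. ring. }
  assert (X1 : ex_RInt (fun x => lam x * N x) (-PI) 0).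
  { apply (ex_RInt_ext (V:=R_NormedModule) (fun x => - (N x))).
    - intros x Hx. rewrite Rmin_left, Rmax_right in Hx by lra. rewrite L1 by lra. reflexivity.
    - apply (ex_RInt_opp (V:=R_NormedModule)). apply Ex. }
  assert (X2 : ex_RInt (fun x => lam x * N x) 0 PI).
  { apply (ex_RInt_ext (V:=R_NormedModule) N).
    - intros x Hx. rewrite Rmin_left, Rmax_right in Hx by lra. rewrite L2 by lra. reflexivity.
    - apply Ex. }
  assert (J : RInt (fun x => lam x * N x) (-PI) PI = I2 - I1).
  { rewrite <- (RInt_Chasles (V:=R_CompleteNormedModule) _ (-PI) 0 PI X1 X2).
    rewrite (RInt_ext (V:=R_CompleteNormedModule) _ (fun x => - (N x)) (-PI) 0).
    2:{ intros x Hx. rewrite Rmin_left, Rmax_right in Hx by lra. rewrite L1 by lra. reflexivity. }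
    rewrite (RInt_ext (V:=R_CompleteNormedModule) _ N 0 PI).
    2:{ intros x Hx. rewrite Rmin_left, Rmax_right in Hx by lra. rewrite L2 by lra. reflexivity. }
    rewrite (RInt_opp (V:=R_CompleteNormedModule)) by apply Ex. fold I1 I2.
    change (plus (opp I1) I2 = I2 - I1). unfold plus, opp; simpl. ring. }
  assert (K : RInt N (-PI) PI = I1 + I2).
  { rewrite <- (RInt_Chasles (V:=R_CompleteNormedModule) N (-PI) 0 PI) by apply Ex. reflexivity. }
  unfold gammaN. rewrite J, K. split.
  - apply Rminus_lt_0. replace (- (I2 - I1) / (I1 + I2) - -1) with (2 * I1 / (I1 + I2)) by (field; lra).
    apply Rdiv_lt_0_compat; lra.
  - apply Rminus_lt_0. replace (1 - - (I2 - I1) / (I1 + I2)) with (2 * I2 / (I1 + I2)) by (field; lra).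
    apply Rdiv_lt_0_compat; lra.
Qed.

Definition Gf (X B q p : R) := -X * Rpower p (-q-1) + B * Rpower p (q-1).

Lemma Gf_cont (X B q : R) (p : R -> R) x : ex_derive p x -> 0 < p x ->
  continuous (fun y => Gf X B q (p y)) x.
Proof.
  intros. apply (@ex_derive_continuous R_AbsRing R_NormedModule). unfold Gf, Rpower. auto_derive. repeat split; auto.
Qed.

Lemma sol_bound (psi dpsi : R -> R) (a q : R) (X B : R -> R) (K Bmin : R) :
  0 < a -> 1 < q -> periodic2pi psi -> (forall x, 0 < psi x) ->
  (forall x, is_derive psi x (dpsi x)) ->
  (forall x, ~ jump_pt x -> exists d2 : R, is_derive dpsi x d2 /\
       a * d2 = Gf (X (lam x)) (B (lam x)) q (psi x)) ->
  0 < Bmin -> 0 <= K ->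
  (forall l, l = 1 \/ l = -1 -> Bmin <= B l /\ X l <= K) ->
  forall x, psi x <= Rmax 1 (K / Bmin).
Proof.
  intros Ha Hq Hper Hpos Hd Hd2 HBm HK Hl.
  assert (Hc : forall x, continuous psi x) by (intros; apply (@ex_derive_continuous R_AbsRing R_NormedModule); eexists; apply Hd).
  destruct (global_max psi Hper Hc) as [x0 Hx0].
  destruct (max_principle psi dpsi a (fun l y => Gf (X l) (B l) q (psi y)) x0 Ha Hd Hd2) as [l [Hl1 Hl2]].
  { intros l. apply Gf_cont; auto. eexists; apply Hd. }
  { auto. }
  destruct (Hl l Hl1) as [HB HX].
  pose proof (pow_bound (psi x0) (X l) (B l) q (Hpos x0) ltac:(lra) Hq Hl2) as Hb.
  intros x. apply Rle_trans with (psi x0); auto.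
  apply Rle_trans with (1 := Hb). apply Rle_max_compat_l.
  apply Rle_trans with (K / B l).
  - unfold Rdiv. apply Rmult_le_compat_r; auto. left. apply Rinv_0_lt_compat. lra.
  - unfold Rdiv. apply Rmult_le_compat_l; auto. apply Rinv_le_contravar; auto.
Qed.

Lemma diff_bound (p1 dp1 p2 dp2 : R -> R) (a q : R) (X1 X2 B : R -> R) (Ymin E M : R) :
  0 < a -> 1 < q -> periodic2pi p1 -> periodic2pi p2 ->
  (forall x, 0 < p1 x) -> (forall x, 0 < p2 x) ->
  (forall x, is_derive p1 x (dp1 x)) -> (forall x, is_derive p2 x (dp2 x)) ->
  (forall x, ~ jump_pt x -> exists d2 : R, is_derive dp1 x d2 /\
       a * d2 = Gf (X1 (lam x)) (B (lam x)) q (p1 x)) ->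
  (forall x, ~ jump_pt x -> exists d2 : R, is_derive dp2 x d2 /\
       a * d2 = Gf (X2 (lam x)) (B (lam x)) q (p2 x)) ->
  0 < Ymin -> 0 <= E -> (forall x, p2 x <= M) ->
  (forall l, l = 1 \/ l = -1 -> 0 <= B l /\ Ymin <= X2 l /\ X1 l - X2 l <= E) ->
  forall x, p1 x - p2 x <= M * E / Ymin.
Proof.
  intros Ha Hq Hper1 Hper2 Hpos1 Hpos2 Hd1 Hd2 He1 He2 HY HE HM Hl.
  assert (HM0 : 0 <= M) by (specialize (HM 0); specialize (Hpos2 0); lra).
  assert (Hbd0 : 0 <= M * E / Ymin).
  { unfold Rdiv. apply Rmult_le_pos. apply Rmult_le_pos; auto. left; apply Rinv_0_lt_compat; auto. }
  set (w := fun y => p1 y - p2 y).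
  assert (Hwp : periodic2pi w) by (intros y; unfold w; rewrite Hper1, Hper2; reflexivity).
  assert (Hwd : forall y, is_derive w y (dp1 y - dp2 y)) by (intros; apply (@is_derive_minus R_AbsRing R_NormedModule); auto).
  assert (Hc : forall x, continuous w x) by (intros; apply (@ex_derive_continuous R_AbsRing R_NormedModule); eexists; apply Hwd).
  destruct (global_max w Hwp Hc) as [x0 Hx0].
  intros x. change (w x <= M * E / Ymin). apply Rle_trans with (w x0); auto.
  destruct (Rle_dec (w x0) 0) as [h|h]. lra.
  destruct (max_principle w (fun y => dp1 y - dp2 y) a
     (fun l y => Gf (X1 l) (B l) q (p1 y) - Gf (X2 l) (B l) q (p2 y)) x0 Ha Hwd) as [l [Hl1 Hl2]].
  { intros x1 Hj. destruct (He1 x1 Hj) as [d1 [Hd1' Ha1]]. destruct (He2 x1 Hj) as [d2 [Hd2' Ha2]].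
    exists (d1 - d2). split. apply (@is_derive_minus R_AbsRing R_NormedModule); auto. rewrite <- Ha1, <- Ha2. ring. }
  { intros l. apply (@continuous_minus R_UniformSpace R_AbsRing R_NormedModule); apply Gf_cont; auto; eexists; auto. }
  { auto. }
  destruct (Hl l Hl1) as [HB [HX2 HX]].
  unfold w in h |- *.
  assert (Hk : X2 l * p1 x0 <= X1 l * p2 x0).
  { apply (key_alg (p1 x0) (p2 x0) (X1 l) (X2 l) (B l) q); auto.
    all: unfold Gf in Hl2; lra. }
  assert (H3 : X2 l * (p1 x0 - p2 x0) <= E * M).
  { specialize (HM x0). specialize (Hpos2 x0). nra. }
  apply Rmult_le_reg_l with Ymin; auto.
  replace (Ymin * (M * E / Ymin)) with (E * M) by (field; lra). nra.
Qed.

Lemma Rpower_le_inv d q : 1 <= d -> 1 <= q -> Rpower d (-q) <= / d.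
Proof.
  intros. rewrite <- (Rpower_1 d) at 2 by lra. rewrite <- Rpower_Ropp.
  apply Rle_Rpower; lra.
Qed.

Lemma lim_transfer (f g : R -> R) (c q D0 : R) (l : Rbar) :
  0 < c -> 1 <= q ->
  (forall d, D0 < d -> Rabs (g d - f d) < c * Rpower d (-q)) ->
  is_lim f p_infty l -> is_lim g p_infty l.
Proof.
  intros Hc Hq Hb Hf.
  assert (H0 : is_lim (fun d => g d - f d) p_infty 0).
  { apply is_lim_spec. intros eps. simpl. pose proof (cond_pos eps).
    exists (Rmax D0 (Rmax 1 (c / eps))). intros x Hx.
    pose proof (Rmax_l D0 (Rmax 1 (c/eps))). pose proof (Rmax_r D0 (Rmax 1 (c/eps))).
    pose proof (Rmax_l 1 (c/eps)). pose proof (Rmax_r 1 (c/eps)).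
    rewrite Rminus_0_r.
    apply Rlt_le_trans with (c * Rpower x (-q)). apply Hb. lra.
    apply Rle_trans with (c * / x).
    apply Rmult_le_compat_l. lra. apply Rpower_le_inv; lra.
    assert (c < eps * x).
    { apply Rle_lt_trans with (eps * (c / eps)). right. field. lra. apply Rmult_lt_compat_l; lra. }
    apply Rmult_le_reg_r with x. lra. field_simplify; lra. }
  apply is_lim_ext with (fun d => f d + (g d - f d)). intros; ring.
  eapply is_lim_plus; eauto.
  destruct l; simpl; try reflexivity. unfold is_Rbar_plus. simpl. f_equal. f_equal. ring.
Qed.

Lemma coef_facts kappa g t eta mu D l : 0 < kappa -> -1 < g < 1 -> (l = 1 \/ l = -1) -> 0 < D <= 1 ->
  kappa * Rmin ((g+1)^2) ((g-1)^2) <= kappa * (g+l)^2 /\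
  kappa * (g+l)^2 <= 4 * kappa /\
  (2*eta^2*(D*D) + kappa*(mu*D+g+l)^2) - kappa * (g+l)^2 <= (2*eta^2 + kappa*(4*Rabs mu + mu^2) + 1) * D /\
  kappa * (g+l)^2 - (2*eta^2*(D*D) + kappa*(mu*D+g+l)^2) <= (2*eta^2 + kappa*(4*Rabs mu + mu^2) + 1) * D /\
  kappa * Rmin ((t+1)^2) ((t-1)^2) <= kappa * (t+l)^2.
Proof.
  intros Hk Hg Hl HD.
  assert (HE : -2 < g + l < 2) by (destruct Hl; subst; lra).
  assert (Hm : Rabs (mu * (g + l)) <= 2 * Rabs mu).
  { rewrite Rabs_mult. rewrite Rmult_comm. apply Rmult_le_compat_r. apply Rabs_pos.
    apply Rabs_le_between. lra. }
  apply Rabs_le_between in Hm.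
  assert (Hmu : 0 <= Rabs mu) by apply Rabs_pos.
  assert (He2 : 0 <= eta^2) by (apply pow2_ge_0).
  assert (Hmu2 : 0 <= mu^2) by (apply pow2_ge_0).
  assert (HDD : D * D <= D) by nra.
  replace ((2*eta^2*(D*D) + kappa*(mu*D+g+l)^2) - kappa * (g+l)^2) with
    (2*eta^2*(D*D) + kappa*(2*D*(mu*(g+l)) + mu^2*(D*D))) by ring.
  replace (kappa * (g+l)^2 - (2*eta^2*(D*D) + kappa*(mu*D+g+l)^2)) with
    (- (2*eta^2*(D*D) + kappa*(2*D*(mu*(g+l)) + mu^2*(D*D)))) by ring.
  assert (T1 : 2*eta^2*(D*D) <= 2*eta^2*D) by nra.
  assert (T2 : mu^2*(D*D) <= mu^2*D) by nra.
  assert (T3 : -(2*D*(2*Rabs mu)) <= 2*D*(mu*(g+l)) <= 2*D*(2*Rabs mu)) by (split; nra).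
  assert (T4 : 0 <= 2*eta^2*(D*D)) by nra.
  assert (T5 : 0 <= mu^2*(D*D)) by nra.
  split; [|split; [|split; [|split]]].
  - apply Rmult_le_compat_l; [lra|]. destruct Hl; subst.
    apply Rmin_l. replace (g + -1) with (g - 1) by ring. apply Rmin_r.
  - assert ((g+l)^2 <= 4) by nra. nra.
  - nra.
  - nra.
  - apply Rmult_le_compat_l; [lra|]. destruct Hl; subst.
    apply Rmin_l. replace (t + -1) with (t - 1) by ring. apply Rmin_r.
Qed.

Theorem proposition3p26
  (n : nat) (Hn : (3 <= n)%nat)
  (N : R -> R) (HNper : periodic2pi N) (HNsm : smooth N) (HNpos : forall x, 0 < N x)
  (t eta mu : R) (Ht : Rabs t <> 1)
  (psi psihat : R -> R -> R)
  (Hpsi : forall d, 0 < d ->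
     let q := 2 * INR n / (INR n - 2) in
     let kappa := (INR n - 1) / INR n in
     W2inf_pos_solution (2 * kappa * q * Rpower d (- (2 * q / INR n)))
       (fun x p =>
          - 2 * eta ^ 2 * Rpower d (- 2 * q) * Rpower p (- q - 1)
          - kappa * (mu * Rpower d (- q) + gammaN N + lam x) ^ 2 * Rpower p (- q - 1)
          + kappa * (t + lam x) ^ 2 * Rpower p (q - 1))
       (psi d))
  (Hpsihat : forall d, 0 < d ->
     let q := 2 * INR n / (INR n - 2) in
     let kappa := (INR n - 1) / INR n in
     W2inf_pos_solution (2 * kappa * q * Rpower d (- (2 * q / INR n)))
       (fun x p =>
          - kappa * (gammaN N + lam x) ^ 2 * Rpower p (- q - 1)
          + kappa * (t + lam x) ^ 2 * Rpower p (q - 1))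
       (psihat d)) :
  let q := 2 * INR n / (INR n - 2) in
  (exists c : R, 0 < c /\ exists D : R, forall d, D < d ->
      forall x, Rabs (psihat d x - psi d x) < c * Rpower d (- q))
  /\ (forall l : Rbar,
        is_lim (fun d => psi d 0) p_infty l <-> is_lim (fun d => psihat d 0) p_infty l).
Proof.
  intros q.
  set (kappa := (INR n - 1) / INR n).
  assert (Hn3 : 3 <= INR n) by (replace 3 with (INR 3) by (simpl; ring); apply le_INR; auto).
  assert (Hq : 1 < q).
  { apply Rminus_lt_0. replace (q - 1) with ((INR n + 2) / (INR n - 2)) by (unfold q; field; lra).
    apply Rdiv_lt_0_compat; lra. }
  assert (Hk : 0 < kappa) by (apply Rdiv_lt_0_compat; lra).
  assert (HNc : forall x, continuous N x).
  { intros x. apply (@ex_derive_continuous R_AbsRing R_NormedModule). exact (HNsm 1%nat x). }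
  pose proof (gamma_bound N HNc HNpos) as Hg.
  set (g := gammaN N) in *.
  assert (Ht1 : t <> 1) by (intro; subst; apply Ht; rewrite Rabs_R1; auto).
  assert (Ht2 : t <> -1) by (intro; subst; apply Ht; unfold Rabs; destruct (Rcase_abs (-1)); lra).
  set (Amin := kappa * Rmin ((g+1)^2) ((g-1)^2)).
  set (Bmin := kappa * Rmin ((t+1)^2) ((t-1)^2)).
  set (C := 2*eta^2 + kappa*(4*Rabs mu + mu^2) + 1).
  assert (HAmin : 0 < Amin).
  { unfold Amin. apply Rmult_lt_0_compat; auto. apply Rmin_glb_lt; nra. }
  assert (HBmin : 0 < Bmin).
  { unfold Bmin. apply Rmult_lt_0_compat; auto.
    assert (t + 1 <> 0) by lra. assert (t - 1 <> 0) by lra.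
    apply Rmin_glb_lt; apply pow2_gt_0; auto. }
  assert (HC : 0 < C).
  { unfold C. pose proof (Rabs_pos mu). pose proof (pow2_ge_0 eta). pose proof (pow2_ge_0 mu). nra. }
  set (Kmax := 4 * kappa + C).
  set (M := Rmax 1 (Kmax / Bmin)).
  assert (HM1 : 1 <= M) by apply Rmax_l.
  set (D0 := Rmax 1 (2 * C / Amin)).
  set (cst := M * C / Amin + M * C / (Amin / 2) + 1).
  assert (Hcst : 0 < cst).
  { unfold cst. assert (0 < M * C / Amin) by (apply Rdiv_lt_0_compat; nra).
    assert (0 < M * C / (Amin / 2)) by (apply Rdiv_lt_0_compat; nra). lra. }
  assert (Main : forall d, D0 < d -> forall x, Rabs (psihat d x - psi d x) < cst * Rpower d (- q)).
  { intros d Hd.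
    pose proof (Rmax_l 1 (2 * C / Amin)) as Hd1. pose proof (Rmax_r 1 (2 * C / Amin)) as Hd2.
    fold D0 in Hd1, Hd2.
    assert (Hdpos : 0 < d) by lra.
    set (D := Rpower d (- q)).
    assert (HDpos : 0 < D) by apply Rpower_pos'.
    assert (HDinv : D <= / d) by (apply Rpower_le_inv; lra).
    assert (HD1 : D <= 1).
    { apply Rle_trans with (/d); auto. rewrite <- Rinv_1. apply Rinv_le_contravar; lra. }
    assert (HDC : C * D <= Amin / 2).
    { assert (/ d < Amin / (2 * C)).
      { replace (Amin / (2 * C)) with (/ (2 * C / Amin)) by (field; lra).
        apply Rinv_lt_contravar. apply Rmult_lt_0_compat; [apply Rdiv_lt_0_compat; lra | lra]. lra. }
      apply Rle_trans with (C * (Amin / (2 * C))). apply Rmult_le_compat_l; lra.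
      right. field. lra. }
    assert (Hpow2 : Rpower d (- 2 * q) = D * D).
    { unfold D. rewrite <- Rpower_plus. f_equal. ring. }
    set (a := 2 * kappa * q * Rpower d (- (2 * q / INR n))).
    assert (Ha : 0 < a).
    { unfold a. pose proof (Rpower_pos' d (- (2 * q / INR n))). apply Rmult_lt_0_compat; auto. nra. }
    set (A := fun l => 2*eta^2*(D*D) + kappa*(mu*D+g+l)^2).
    set (Ah := fun l => kappa*(g+l)^2).
    set (Bf := fun l => kappa*(t+l)^2).
    assert (CF : forall l, l = 1 \/ l = -1 ->
      Amin <= Ah l /\ Ah l <= 4 * kappa /\ A l - Ah l <= C * D /\ Ah l - A l <= C * D /\ Bmin <= Bf l).
    { intros l Hl. exact (coef_facts kappa g t eta mu D l Hk Hg Hl (conj HDpos HD1)). }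
    specialize (Hpsi d Hdpos). specialize (Hpsihat d Hdpos). cbv zeta in Hpsi, Hpsihat.
    fold q kappa a D g in Hpsi, Hpsihat.
    destruct Hpsi as [Hper1 [Hpos1 [dp1 [Hd1' He1]]]].
    destruct Hpsihat as [Hper2 [Hpos2 [dp2 [Hd2' He2]]]].
    assert (E1 : forall x, ~ jump_pt x -> exists d2 : R, is_derive dp1 x d2 /\
       a * d2 = Gf (A (lam x)) (Bf (lam x)) q (psi d x)).
    { intros x Hj. destruct (He1 x Hj) as [d2 [H1 H2]]. exists d2. split; auto.
      rewrite H2. unfold Gf, A, Bf. rewrite Hpow2. ring. }
    assert (E2 : forall x, ~ jump_pt x -> exists d2 : R, is_derive dp2 x d2 /\
       a * d2 = Gf (Ah (lam x)) (Bf (lam x)) q (psihat d x)).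
    { intros x Hj. destruct (He2 x Hj) as [d2 [H1 H2]]. exists d2. split; auto.
      rewrite H2. unfold Gf, Ah, Bf. ring. }
    assert (HK : 0 <= Kmax) by (unfold Kmax; lra).
    assert (HCD1 : C * D <= C) by nra.
    assert (B1 : forall x, psi d x <= M).
    { apply (sol_bound (psi d) dp1 a q A Bf Kmax Bmin); auto.
      intros l Hl. destruct (CF l Hl) as [? [? [? [? ?]]]]. unfold Kmax. split; lra. }
    assert (B2 : forall x, psihat d x <= M).
    { apply (sol_bound (psihat d) dp2 a q Ah Bf Kmax Bmin); auto.
      intros l Hl. destruct (CF l Hl) as [? [? [? [? ?]]]]. unfold Kmax. split; lra. }
    assert (HCD : 0 <= C * D) by nra.
    assert (W1 : forall x, psi d x - psihat d x <= M * (C * D) / Amin).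
    { apply (diff_bound (psi d) dp1 (psihat d) dp2 a q A Ah Bf); auto.
      intros l Hl. destruct (CF l Hl) as [? [? [? [? ?]]]]. split; [unfold Bf; apply Rmult_le_pos; [lra | apply pow2_ge_0]|]. split; lra. }
    assert (W2 : forall x, psihat d x - psi d x <= M * (C * D) / (Amin / 2)).
    { apply (diff_bound (psihat d) dp2 (psi d) dp1 a q Ah A Bf); auto. lra.
      intros l Hl. destruct (CF l Hl) as [? [? [? [? ?]]]]. split; [unfold Bf; apply Rmult_le_pos; [lra | apply pow2_ge_0]|]. split; lra. }
    intros x. specialize (W1 x). specialize (W2 x).
    assert (Q1 : M * (C * D) / Amin = (M * C / Amin) * D) by (field; lra).
    assert (Q2 : M * (C * D) / (Amin / 2) = (M * C / (Amin / 2)) * D) by (field; lra).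
    assert (P1 : 0 <= M * C / Amin) by (left; apply Rdiv_lt_0_compat; nra).
    assert (P2 : 0 <= M * C / (Amin / 2)) by (left; apply Rdiv_lt_0_compat; nra).
    unfold cst. apply Rabs_def1; nra. }
  split.
  - exists cst. split; auto. exists D0. exact Main.
  - intros l. split; intros Hl.
    + apply (lim_transfer (fun d => psi d 0) (fun d => psihat d 0) cst q D0 l Hcst ltac:(lra)); auto.
    + apply (lim_transfer (fun d => psihat d 0) (fun d => psi d 0) cst q D0 l Hcst ltac:(lra)); auto.
      intros d Hd. rewrite Rabs_minus_sym. apply Main; auto.
Qed.
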